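(* Let $a,b,a',b'\in\mathbb{R}$, $n,m\in\mathbb{N}_0$, and for $\sigma>0$ let \[ f(\sigma)=\int_a^b\int_{a'}^{b'}x^ny^me^{-\sigma^2(x-y)^2}\,dy\,dx. \] Let $\Delta=\{b-b',\,b-a',\,a-b',\,a-a'\}$. Then $f$ is a linear combination (with coefficients independent of $\sigma$) of terms of the form \[ \sigma^{-2k}e^{-\sigma^2\delta^2}\qquad\text{and}\qquad\sigma^{-(2k-1)}\operatorname{Erf}(\sigma\delta),\qquad k\in\{1,2,\dots\},\ \delta\in\Delta, \] where the exponent $\nu$ of $\sigma^{-1}$ (namely $\nu=2k$ in the first case and $\nu=2k-1$ in the second) satisfies $1\le\nu\le n+m+2$. The coefficient of a term belonging to $\delta=c-c'$ with $c\in\{a,b\}$ and $c'\in\{a',b'\}$ is a homogeneous polynomial of degree $n+m+2-\nu$ in $\mathbb{Q}[c,c']$.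
   Context: $\operatorname{Erf}(\xi)=\int_0^\xi e^{-x^2}\,dx$ (the odd primitive of the Gaussian, normalized without the factor $2/\sqrt\pi$). *)

(* Defs.v *)
From Stdlib Require Import Reals QArith.
From Coquelicot Require Import Coquelicot.
Open Scope R_scope.

(* Erf(xi) = int_0^xi e^{-x^2} dx  (no 2/sqrt(pi) normalisation; oriented). *)
Definition Erf (xi : R) : R := RInt (fun x => exp (- (x ^ 2))) 0 xi.

Definition fint (n m : nat) (a b a' b' sigma : R) : R :=
  RInt (fun x => RInt (fun y => x ^ n * y ^ m * exp (- (sigma ^ 2 * (x - y) ^ 2))) a' b') a b.

Definition hom_poly_eval (d : nat) (q : nat -> Q) (c c' : R) : R :=
  sum_f_R0 (fun i => Q2R (q i) * c ^ i * c' ^ (d - i)) d.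

Definition basis_term (nu : nat) (sigma delta : R) : R :=
  if Nat.even nu then / sigma ^ nu * exp (- (sigma ^ 2 * delta ^ 2))
  else / sigma ^ nu * Erf (sigma * delta).

Definition pair_sum (N : nat) (P : nat -> nat -> Q) (c c' sigma : R) : R :=
  sum_f_R0 (fun k => hom_poly_eval (N - S k) (P (S k)) c c' * basis_term (S k) sigma (c - c'))
    (N - 1).

(* Main.v *)
Require Import Defs.
From Stdlib Require Import Reals QArith Qreals Lra Lia List Arith Wf_nat.
From Coquelicot Require Import Coquelicot.
Import ListNotations.
Open Scope R_scope.

Lemma dplus (f g : R -> R) x a b :
  is_derive f x a -> is_derive g x b -> is_derive (fun t => f t + g t) x (a + b).
Proof. intros; apply (is_derive_plus f g); auto. Qed.

Lemma dmult (f g : R -> R) x a b :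
  is_derive f x a -> is_derive g x b -> is_derive (fun t => f t * g t) x (a * g x + f x * b).
Proof. intros H1 H2. apply (is_derive_mult f g); auto. intros; apply Rmult_comm. Qed.

Lemma dval (f : R -> R) (x a b : R) : is_derive f x a -> a = b -> is_derive f x b.
Proof. intros H ->; auto. Qed.

Lemma dext (f g : R -> R) (x a : R) : (forall t, g t = f t) -> is_derive g x a -> is_derive f x a.
Proof. intros H H'. apply (is_derive_ext g f); auto. Qed.

Lemma gauss_cont z : continuous (fun x => exp (- (x ^ 2))) z.
Proof. apply (ex_derive_continuous (K:=R_AbsRing) (V:=R_NormedModule)). auto_derive. auto. Qed.

Lemma Erf_derive z : is_derive Erf z (exp (- (z ^ 2))).
Proof.
  apply (is_derive_RInt (fun x => exp (- (x ^ 2))) Erf 0 z).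
  - apply filter_forall. intros b. unfold Erf. apply (RInt_correct (V:=R_CompleteNormedModule)).
    apply ex_RInt_continuous. intros; apply gauss_cont.
  - apply gauss_cont.
Qed.

Lemma Erf_odd z : Erf (- z) = - Erf z.
Proof.
  unfold Erf.
  assert (H := RInt_comp_lin (fun x => exp (- (x ^ 2))) (-1) 0 0 z).
  replace (-1 * 0 + 0) with 0 in H by ring.
  replace (-1 * z + 0) with (-z) in H by ring.
  rewrite <- H.
  - rewrite <- (RInt_opp (fun x => exp (- (x ^ 2)))).
    + apply RInt_ext. intros x _. unfold scal; simpl. unfold mult, opp; simpl.
      replace ((-1 * x + 0) * ((-1 * x + 0) * 1)) with (x*(x*1)) by ring. ring.
    + apply ex_RInt_continuous. intros; apply gauss_cont.
  - apply ex_RInt_continuous. intros; apply gauss_cont.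
Qed.

Definition dbt (nu : nat) (s d : R) : R :=
  if Nat.even nu then / s ^ nu * (-2 * s ^ 2 * d) * exp (- (s ^ 2 * d ^ 2))
  else / s ^ nu * s * exp (- (s ^ 2 * d ^ 2)).

Lemma d_bt nu s y x : is_derive (fun t => basis_term nu s (t - y)) x (dbt nu s (x - y)).
Proof.
  unfold basis_term, dbt. destruct (Nat.even nu).
  - auto_derive; auto.
    replace (s * (s * 1) * ((x + - y) * ((x + - y) * 1))) with (s ^ 2 * (x - y) ^ 2) by ring. ring.
  - apply dval with (/ s ^ nu * (s * exp (- ((s * (x - y)) ^ 2)))).
    + apply is_derive_scal.
      apply (is_derive_comp Erf (fun t => s * (t - y))).
      * apply Erf_derive.
      * auto_derive; auto. apply Rmult_1_r.
    + replace ((s * (x - y)) ^ 2) with (s ^ 2 * (x - y) ^ 2) by ring. symmetry; apply Rmult_assoc.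
Qed.

Record mono := Mk { mq : Q; mnu : nat; mi : nat; mj : nat }.

Definition evm (t : mono) (x y s : R) : R :=
  Q2R (mq t) * x ^ mi t * y ^ mj t * basis_term (mnu t) s (x - y).

Fixpoint evL (l : list mono) (x y s : R) : R :=
  match l with [] => 0 | t :: l' => evm t x y s + evL l' x y s end.

Definition scaleL (c : Q) (l : list mono) : list mono :=
  map (fun t => Mk (c * mq t) (mnu t) (mi t) (mj t)) l.
Definition shiftL (dj : nat) (l : list mono) : list mono :=
  map (fun t => Mk (mq t) (mnu t) (mi t) (mj t + dj)) l.

Lemma evL_app l1 l2 x y s : evL (l1 ++ l2) x y s = evL l1 x y s + evL l2 x y s.
Proof. induction l1; simpl; [ring| rewrite IHl1; ring]. Qed.

Lemma evL_scale c l x y s : evL (scaleL c l) x y s = Q2R c * evL l x y s.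
Proof. induction l; simpl; [ring|]. rewrite IHl. unfold evm; simpl. rewrite Q2R_mult. ring. Qed.

Lemma evL_shift dj l x y s : evL (shiftL dj l) x y s = y ^ dj * evL l x y s.
Proof. induction l; simpl; [ring|]. rewrite IHl. unfold evm; simpl. rewrite pow_add. ring. Qed.

Definition qn (k : nat) : Q := inject_Z (Z.of_nat k).
Lemma Q2R_qn k : Q2R (qn k) = INR k.
Proof. unfold qn, Q2R; simpl. rewrite INR_IZR_INZ. field. Qed.
Lemma Q2R_1 : Q2R 1%Q = 1.
Proof. unfold Q2R; simpl. field. Qed.
Lemma Q2R_mhalf : Q2R (-1 # 2)%Q = - / 2.
Proof. unfold Q2R; simpl. field. Qed.

Fixpoint AE (i nu : nat) : list mono :=
  match i with
  | O => [Mk 1%Q (S nu) 0 0]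
  | S i1 =>
    match i1 with
    | O => [Mk (-1 # 2)%Q (S (S nu)) 0 0; Mk 1%Q (S nu) 0 1]
    | S i0 => Mk (-1 # 2)%Q (S (S nu)) i1 0
               :: scaleL (qn i1 / 2)%Q (AE i0 (S (S nu))) ++ shiftL 1 (AE i1 nu)
    end
  end.

Lemma d_evm t y s x : is_derive (fun u => evm t u y s) x
  (Q2R (mq t) * (INR (mi t) * x ^ pred (mi t) * y ^ mj t * basis_term (mnu t) s (x - y)
     + x ^ mi t * y ^ mj t * dbt (mnu t) s (x - y))).
Proof.
  unfold evm.
  apply dext with (fun u => (Q2R (mq t) * y ^ mj t) * (u ^ mi t * basis_term (mnu t) s (u - y))).
  { intros; ring. }
  eapply dval. apply is_derive_scal. apply dmult.
  - apply (is_derive_pow (fun u => u) (mi t) x 1). apply (is_derive_id (K:=R_AbsRing)).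
  - apply d_bt.
  - simpl. ring.
Qed.


Definition devm (t : mono) (x y s : R) : R :=
  Q2R (mq t) * (INR (mi t) * x ^ pred (mi t) * y ^ mj t * basis_term (mnu t) s (x - y)
     + x ^ mi t * y ^ mj t * dbt (mnu t) s (x - y)).
Fixpoint devL (l : list mono) (x y s : R) : R :=
  match l with [] => 0 | t :: l' => devm t x y s + devL l' x y s end.

Lemma dconst (c x : R) : is_derive (fun _ : R => c) x 0.
Proof. apply dval with 0. { auto_derive; auto. } reflexivity. Qed.

Lemma d_evL l y s x : is_derive (fun u => evL l u y s) x (devL l x y s).
Proof.
  induction l as [|t l IH]; simpl.
  - apply dconst.
  - apply dplus; [apply d_evm | apply IH].
Qed.

Lemma evS n : Nat.even (S n) = negb (Nat.even n).
Proof. induction n; [reflexivity|]. rewrite IHn. simpl. destruct (Nat.even n); reflexivity. Qed.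
Lemma evSS n : Nat.even (S (S n)) = Nat.even n.
Proof. reflexivity. Qed.

Ltac bts Hnu := unfold devm, dbt, basis_term; simpl mq; simpl mi; simpl mj; simpl mnu;
  rewrite ?evSS, ?evS, ?Hnu; simpl negb; cbv iota;
  rewrite ?Q2R_1, ?Q2R_mhalf, ?Q2R_mult, ?Q2R_opp, ?Q2R_qn.

Ltac fin := simpl; field; repeat split; try apply pow_nonzero; lra.

Lemma AE_SS i0 nu : AE (S (S i0)) nu = Mk (-1 # 2)%Q (S (S nu)) (S i0) 0
  :: scaleL (qn (S i0) / 2)%Q (AE i0 (S (S nu))) ++ shiftL 1 (AE (S i0) nu).
Proof. reflexivity. Qed.
Lemma Q2R_2 : Q2R 2 = 2.
Proof. unfold Q2R; simpl. field. Qed.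

Lemma AE_ok i : forall nu, Nat.even nu = true -> forall x y s, 0 < s ->
  is_derive (fun u => evL (AE i nu) u y s) x (x ^ i * basis_term nu s (x - y)).
Proof.
  induction i as [i IH] using lt_wf_ind.
  intros nu Hnu x y s Hs.
  destruct i as [|[|i0]].
  - eapply dval. apply d_evL. simpl devL. bts Hnu. fin.
  - eapply dval. apply d_evL. simpl devL. bts Hnu. fin.
  - eapply dval.
    + apply dext with (fun u => evm (Mk (-1 # 2)%Q (S (S nu)) (S i0) 0) u y s
         + (Q2R (qn (S i0) / 2)%Q * evL (AE i0 (S (S nu))) u y s
         + y ^ 1 * evL (AE (S i0) nu) u y s)).
      { intros u. rewrite AE_SS. cbn [evL]. rewrite evL_app, evL_scale, evL_shift. reflexivity. }
      apply dplus; [apply d_evm|]. apply dplus; apply is_derive_scal; apply IH; auto.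
    + bts Hnu. unfold Qdiv. rewrite Q2R_mult, Q2R_inv by (intro H; discriminate H).
      rewrite Q2R_qn, Q2R_2. fin.
Qed.

Definition AR (i nu : nat) : list mono :=
  Mk (/ qn (S i))%Q nu (S i) 0 :: scaleL (- / qn (S i))%Q (AE (S i) (pred nu)).

Lemma qn_nz i : ~ (qn (S i) == 0)%Q.
Proof. unfold qn. intro H. apply Qeq_alt in H. simpl in H. discriminate H. Qed.

Lemma INR_S_nz i : INR (S i) <> 0.
Proof. apply not_0_INR. discriminate. Qed.

Lemma AR_ok i nu : Nat.even nu = false -> forall x y s, 0 < s ->
  is_derive (fun u => evL (AR i nu) u y s) x (x ^ i * basis_term nu s (x - y)).
Proof.
  intros Hnu x y s Hs. destruct nu as [|nu]; [discriminate|].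
  rewrite evS in Hnu. assert (Hnu' : Nat.even nu = true) by (destruct (Nat.even nu); auto).
  eapply dval.
  - apply dext with (fun u => evm (Mk (/ qn (S i))%Q (S nu) (S i) 0) u y s
       + Q2R (- / qn (S i))%Q * evL (AE (S i) nu) u y s).
    { intros u. unfold AR. cbn [evL]. rewrite evL_scale. reflexivity. }
    apply dplus; [apply d_evm|]. apply is_derive_scal. apply AE_ok; auto.
  - assert (HI := INR_S_nz i).
    bts Hnu'. rewrite Q2R_inv by apply qn_nz. rewrite Q2R_qn.
    simpl pred. simpl. field. repeat split; auto; try apply pow_nonzero; lra.
Qed.

Definition A (i nu : nat) : list mono := if Nat.even nu then AE i nu else AR i nu.

Lemma A_ok i nu x y s : 0 < s ->
  is_derive (fun u => evL (A i nu) u y s) x (x ^ i * basis_term nu s (x - y)).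
Proof.
  intros Hs. unfold A. destruct (Nat.even nu) eqn:E.
  - apply AE_ok; auto.
  - apply AR_ok; auto.
Qed.

Definition Amono (t : mono) : list mono := scaleL (mq t) (shiftL (mj t) (A (mi t) (mnu t))).
Definition Ax (l : list mono) : list mono := flat_map Amono l.

Lemma Ax_ok l x y s : 0 < s ->
  is_derive (fun u => evL (Ax l) u y s) x (evL l x y s).
Proof.
  intros Hs. induction l as [|t l IH].
  - simpl. apply dconst.
  - eapply dval.
    + apply dext with (fun u => Q2R (mq t) * (y ^ mj t * evL (A (mi t) (mnu t)) u y s) + evL (Ax l) u y s).
      { intros u. unfold Ax. simpl flat_map. rewrite evL_app. unfold Amono.
        rewrite evL_scale, evL_shift. reflexivity. }
      apply dplus; [|apply IH]. apply is_derive_scal. apply is_derive_scal. apply A_ok; auto.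
    + simpl evL. unfold evm. ring.
Qed.

Definition swm (t : mono) : mono :=
  Mk (if Nat.even (mnu t) then mq t else Qopp (mq t)) (mnu t) (mj t) (mi t).

Lemma evm_sw t x y s : evm (swm t) x y s = evm t y x s.
Proof.
  unfold evm, swm, basis_term; cbn [mq mnu mi mj].
  destruct (Nat.even (mnu t)).
  - replace ((x - y) ^ 2) with ((y - x) ^ 2) by ring. ring.
  - rewrite Q2R_opp. replace (s * (x - y)) with (- (s * (y - x))) by ring.
    rewrite Erf_odd. ring.
Qed.

Lemma evL_sw l x y s : evL (map swm l) x y s = evL l y x s.
Proof. induction l; simpl; [reflexivity|]. rewrite IHl, evm_sw. reflexivity. Qed.

Definition Ay (l : list mono) : list mono := map swm (Ax (map swm l)).

Lemma Ay_ok l x y s : 0 < s ->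
  is_derive (fun v => evL (Ay l) x v s) y (evL l x y s).
Proof.
  intros Hs. eapply dval.
  - apply dext with (fun v => evL (Ax (map swm l)) v x s).
    { intros v. unfold Ay. symmetry; apply evL_sw. }
    apply Ax_ok; auto.
  - apply evL_sw.
Qed.

Lemma evL_cont l y s x : continuous (fun u => evL l u y s) x.
Proof.
  apply (ex_derive_continuous (K:=R_AbsRing) (V:=R_NormedModule)).
  eexists. apply d_evL.
Qed.

Lemma dbl_int (g H F : R -> R -> R) a b a' b' :
  (forall x y, is_derive (fun v => H x v) y (g x y)) ->
  (forall x y, continuous (fun v => g x v) y) ->
  (forall x y, is_derive (fun u => F u y) x (H x y)) ->
  (forall x y, continuous (fun u => H u y) x) ->
  RInt (fun x => RInt (fun y => g x y) a' b') a b = F b b' - F a b' - F b a' + F a a'.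
Proof.
  intros HH Hg HF HHc.
  rewrite (RInt_ext _ (fun x => H x b' - H x a')).
  2:{ intros x _. apply is_RInt_unique.
      apply (is_RInt_derive (fun v => H x v) (fun y => g x y)); intros; auto. }
  rewrite (is_RInt_unique (fun x => H x b' - H x a') a b (minus (F b b' - F b a') (F a b' - F a a'))).
  - unfold minus, plus, opp; simpl. ring.
  - apply (is_RInt_derive (fun u => F u b' - F u a')); intros x _.
    + apply dplus; [apply HF|]. apply dval with (-1 * H x a').
      * apply dext with (fun u => -1 * F u a'); [intros; ring|]. apply is_derive_scal, HF.
      * ring.
    + apply (continuous_minus (fun u => H u b') (fun u => H u a')); auto.
Qed.

Definition wt (t : mono) : nat := (mi t + mj t + mnu t)%nat.

Lemma Forall_scale P c l : List.Forall P l ->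
  (forall t, P t -> P (Mk (c * mq t) (mnu t) (mi t) (mj t))) -> List.Forall P (scaleL c l).
Proof. intros H1 H2. unfold scaleL. apply List.Forall_map. eapply List.Forall_impl; [|exact H1]. auto. Qed.

Lemma AE_inv i : forall nu,
  List.Forall (fun t => (nu < mnu t)%nat /\ wt t = (i + nu + 1)%nat) (AE i nu).
Proof.
  induction i as [i IH] using lt_wf_ind. intros nu.
  destruct i as [|[|i0]].
  - simpl. repeat constructor; unfold wt; simpl; lia.
  - simpl. repeat constructor; unfold wt; simpl; lia.
  - rewrite AE_SS. constructor; [unfold wt; simpl; lia|].
    apply List.Forall_app; split.
    + apply Forall_scale.
      * eapply List.Forall_impl; [|apply (IH i0); lia]. simpl. intros t [H1 H2]; split; [lia|].
        rewrite H2. lia.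
      * unfold wt; simpl; auto.
    + unfold shiftL. apply List.Forall_map. eapply List.Forall_impl; [|apply (IH (S i0)); lia].
      intros t [H1 H2]. unfold wt in *; simpl. split; lia.
Qed.

Lemma A_inv i nu : List.Forall (fun t => (1 <= mnu t)%nat /\ wt t = (i + nu + 1)%nat) (A i nu).
Proof.
  unfold A. destruct (Nat.even nu) eqn:E.
  - eapply List.Forall_impl; [|apply AE_inv]. intros t [H1 H2]; split; lia.
  - destruct nu as [|nu]; [discriminate|]. unfold AR. constructor; [unfold wt; simpl; lia|].
    apply Forall_scale.
    + eapply List.Forall_impl; [|apply AE_inv]. simpl. intros t [H1 H2]; split; lia.
    + unfold wt; simpl; auto.
Qed.

Lemma Ax_inv w l : List.Forall (fun t => wt t = w) l ->
  List.Forall (fun t => (1 <= mnu t)%nat /\ wt t = S w) (Ax l).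
Proof.
  induction l as [|t l IH]; intros H; simpl; auto.
  inversion H; subst. apply List.Forall_app; split; auto.
  unfold Amono. apply Forall_scale; [|unfold wt; simpl; auto].
  unfold shiftL. apply List.Forall_map. eapply List.Forall_impl; [|apply A_inv].
  intros u [H1 H2]. unfold wt in *; simpl. split; lia.
Qed.

Lemma sw_inv P l : List.Forall P l -> (forall t, P t -> P (swm t)) -> List.Forall P (map swm l).
Proof. intros H1 H2. apply List.Forall_map. eapply List.Forall_impl; [|exact H1]. auto. Qed.

Definition delta (t : mono) (nu i : nat) : Q :=
  if andb (Nat.eqb (mnu t) nu) (Nat.eqb (mi t) i) then mq t else 0%Q.
Fixpoint coefL (l : list mono) (nu i : nat) : Q :=
  match l with [] => 0%Q | t :: l' => (delta t nu i + coefL l' nu i)%Q end.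

Lemma Q2R_0 : Q2R 0%Q = 0.
Proof. unfold Q2R; simpl. ring. Qed.

Lemma sum_zero f n : (forall k, (k <= n)%nat -> f k = 0) -> sum_f_R0 f n = 0.
Proof. induction n; intros H; simpl. apply H; lia. rewrite IHn, H; [ring | lia | intros; apply H; lia]. Qed.

Lemma sum_delta f n p : (p <= n)%nat -> (forall k, (k <= n)%nat -> k <> p -> f k = 0) ->
  sum_f_R0 f n = f p.
Proof.
  induction n; intros Hp H; simpl.
  - assert (p = 0)%nat by lia. subst; auto.
  - destruct (Nat.eq_dec p (S n)).
    + subst. rewrite sum_zero; [ring|]. intros k Hk. apply H; lia.
    + rewrite (H (S n)) by lia. rewrite IHn; [ring | lia | intros; apply H; lia].
Qed.

Lemma hpe_plus d p q c c' :
  hom_poly_eval d (fun i => p i + q i)%Q c c' = hom_poly_eval d p c c' + hom_poly_eval d q c c'.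
Proof. unfold hom_poly_eval. rewrite <- sum_plus. apply sum_eq. intros. rewrite Q2R_plus. ring. Qed.

Lemma ps_plus N p q c c' s :
  pair_sum N (fun nu i => p nu i + q nu i)%Q c c' s = pair_sum N p c c' s + pair_sum N q c c' s.
Proof. unfold pair_sum. rewrite <- sum_plus. apply sum_eq. intros. rewrite hpe_plus. ring. Qed.

Lemma ps_zero N c c' s : pair_sum N (fun _ _ => 0%Q) c c' s = 0.
Proof.
  unfold pair_sum. apply sum_zero. intros. unfold hom_poly_eval.
  rewrite sum_zero; [ring|]. intros. rewrite Q2R_0. ring.
Qed.

Lemma ps_delta N t c c' s : (1 <= mnu t)%nat -> wt t = N ->
  pair_sum N (delta t) c c' s = evm t c c' s.
Proof.
  intros H1 H2. unfold wt in H2. unfold pair_sum.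
  rewrite (sum_delta _ _ (pred (mnu t))); [| lia |].
  - replace (S (pred (mnu t))) with (mnu t) by lia.
    unfold hom_poly_eval. rewrite (sum_delta _ _ (mi t)); [| lia |].
    + unfold delta, evm. rewrite !Nat.eqb_refl. simpl.
      replace (N - mnu t - mi t)%nat with (mj t) by lia. ring.
    + intros k _ Hk. unfold delta. rewrite Nat.eqb_refl.
      assert (E : (mi t =? k)%nat = false) by (apply Nat.eqb_neq; lia). rewrite E. simpl. rewrite Q2R_0. ring.
  - intros k _ Hk. unfold hom_poly_eval. rewrite sum_zero; [ring|].
    intros i _. unfold delta. replace (mnu t =? S k)%nat with false.
    + simpl. rewrite Q2R_0. ring.
    + symmetry. apply Nat.eqb_neq. lia.
Qed.

Lemma evL_ps N l c c' s : List.Forall (fun t => (1 <= mnu t)%nat /\ wt t = N) l ->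
  evL l c c' s = pair_sum N (coefL l) c c' s.
Proof.
  induction l as [|t l IH]; intros H; simpl.
  - symmetry. apply ps_zero.
  - inversion H as [|? ? [Ha Hb] Hl]; subst.
    change (coefL (t :: l)) with (fun nu i => (delta t nu i + coefL l nu i)%Q).
    rewrite ps_plus, ps_delta, IH; auto.
Qed.

Definition Hl (n m : nat) : list mono := Ay [Mk 1%Q 0 n m].
Definition Fl (n m : nat) : list mono := Ax (Hl n m).

Lemma Fl_inv n m : List.Forall (fun t => (1 <= mnu t)%nat /\ wt t = (n + m + 2)%nat) (Fl n m).
Proof.
  unfold Fl. eapply List.Forall_impl; [|apply (Ax_inv (S (n + m)))].
  - intros t [H1 H2]; split; lia.
  - unfold Hl, Ay. apply sw_inv.
    + eapply List.Forall_impl; [|apply (Ax_inv (n + m))].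
      * intros t [H1 H2]; exact H2.
      * repeat constructor. unfold wt; simpl; lia.
    + intros t H. unfold wt, swm in *; simpl. lia.
Qed.

Lemma Fl_neg_inv n m : List.Forall (fun t => (1 <= mnu t)%nat /\ wt t = (n + m + 2)%nat)
  (scaleL (-1)%Q (Fl n m)).
Proof. apply Forall_scale; [apply Fl_inv|]. unfold wt; simpl; auto. Qed.

Lemma Q2R_m1 : Q2R (-1)%Q = -1.
Proof. unfold Q2R; simpl. field. Qed.

Theorem lemma2 (n m : nat) :
  exists P : bool -> bool -> nat -> nat -> Q,
    forall a b a' b' sigma : R, 0 < sigma ->
      fint n m a b a' b' sigma =
        pair_sum (n + m + 2) (P false false) a a' sigma
      + pair_sum (n + m + 2) (P false true) a b' sigma
      + pair_sum (n + m + 2) (P true false) b a' sigma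
      + pair_sum (n + m + 2) (P true true) b b' sigma.
Proof.
  exists (fun b1 b2 => if Bool.eqb b1 b2 then coefL (Fl n m) else coefL (scaleL (-1)%Q (Fl n m))).
  intros a b a' b' s Hs. simpl.
  rewrite <- !(evL_ps (n + m + 2)) by (apply Fl_inv || apply Fl_neg_inv).
  rewrite !evL_scale, Q2R_m1.
  assert (E := dbl_int (fun x y => x ^ n * y ^ m * exp (- (s ^ 2 * (x - y) ^ 2)))
                 (fun x y => evL (Hl n m) x y s) (fun x y => evL (Fl n m) x y s) a b a' b').
  unfold fint. rewrite E; [ring| | | |].
  - intros x y. eapply dval. apply Ay_ok; auto.
    simpl. unfold evm, basis_term; simpl. rewrite Q2R_1. field.
  - intros x y. apply (ex_derive_continuous (K:=R_AbsRing) (V:=R_NormedModule)).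
    auto_derive. auto.
  - intros x y. apply Ax_ok; auto.
  - intros x y. apply evL_cont.
Qed.
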